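(* Let ${\bf f}=(f_1,\dots,f_n)$ be a complete intersection (of $n$ quadrics in $n$ variables) with $k\le 2^n$ real points. Then (a) $\mathcal{R}^{lin}_{\bf f}$ consists of $k$ spectrahedral cones, each linearly isomorphic to the master spectrahedron $\mathrm{S}^{lin}_{\bf f}$; and (b) $\mathcal{R}^{ed}_{\bf f}$ consists of $k$ full-dimensional spectrahedra, each (affinely) isomorphic to the master spectrahedron $\mathrm{S}^{ed}_{\bf f}$.
   Context: Write $f_i(x)=x^TA_ix+2a_i^Tx+\alpha_i$ with $A_i$ real symmetric $n\times n$, $a_i\in\mathbb{R}^n$, $\alpha_i\in\mathbb{R}$; $V_{\bf f}\subset\mathbb{R}^n$ is the real zero set. Master spectrahedra: $\mathrm{S}^{lin}_{\bf f}=\{\lambda\in\mathbb{R}^n:\sum_i\lambda_iA_i\prec0\}$, $\mathrm{S}^{ed}_{\bf f}=\{\lambda\in\mathbb{R}^n:\sum_i\lambda_iA_i\prec I_n\}$. SDP-exact regions: $\mathcal{R}^{lin}_{\bf f}$ is the set of $u\in\mathbb{R}^n$ such that there exist $x\in V_{\bf f}$ and $\lambda\in\mathrm{S}^{lin}_{\bf f}$ with $u=\sum_i\lambda_i(a_i+A_ix)$; $\mathcal{R}^{ed}_{\bf f}$ is the set of $u\in\mathbb{R}^n$ such that there exist $x\in V_{\bf f}$ and $\lambda\in\mathrm{S}^{ed}_{\bf f}$ with $u=x-\sum_i\lambda_i(a_i+A_ix)$. (These are the SDP-exact regions, i.e. cost parameters for which the Shor relaxation of minimizing $u^Tx$, resp.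 $\|x-u\|^2$, over $V_{\bf f}$ is exact with strict complementarity.) *)

(* Defs.v *)
From HB Require Import structures.
From mathcomp Require Import all_boot all_order all_algebra.
From mathcomp Require Import reals.
From mathcomp Require Import complex.
Set Implicit Arguments. Unset Strict Implicit. Unset Printing Implicit Defensive.
Import Order.TTheory GRing.Theory Num.Theory.
Local Open Scope ring_scope.

Definition quad_eval (K : comNzRingType) (n : nat)
  (A : 'M[K]_n) (a : 'cV[K]_n) (alpha : K) (x : 'cV[K]_n) : K :=
  (x^T *m A *m x) ord0 ord0 + 2 * ((a^T *m x) ord0 ord0) + alpha.

Definition Vf (R : realType) (n : nat) (A : 'I_n -> 'M[R]_n) (a : 'I_n -> 'cV[R]_n)
  (alpha : 'I_n -> R) (x : 'cV[R]_n) : Prop :=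
  forall i, quad_eval (A i) (a i) (alpha i) x = 0.

Definition VfC (R : realType) (n : nat) (A : 'I_n -> 'M[R]_n) (a : 'I_n -> 'cV[R]_n)
  (alpha : 'I_n -> R) (z : 'cV[complex R]_n) : Prop :=
  forall i, quad_eval (map_mx (fun r : R => Complex r 0) (A i))
                      (map_mx (fun r : R => Complex r 0) (a i)) (Complex (alpha i) 0) z = 0.

(* (half) Jacobian matrix of f at z : row i is (A_i z + a_i)^T *)
Definition jacobian (K : comNzRingType) (n : nat) (A : 'I_n -> 'M[K]_n)
  (a : 'I_n -> 'cV[K]_n) (z : 'cV[K]_n) : 'M[K]_n :=
  \matrix_(i, j) (A i *m z + a i) j ord0.

(* f is a complete intersection: the complex variety V_C(f) is finite
   (zero-dimensional) and reduced, i.e. the Jacobian is nonsingular at every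
   complex zero. *)
Definition complete_intersection (R : realType) (n : nat) (A : 'I_n -> 'M[R]_n)
  (a : 'I_n -> 'cV[R]_n) (alpha : 'I_n -> R) : Prop :=
  (exists s : seq 'cV[complex R]_n, forall z, VfC A a alpha z -> z \in s) /\
  (forall z, VfC A a alpha z ->
     \det (jacobian (fun i => map_mx (fun r : R => Complex r 0) (A i))
                    (fun i => map_mx (fun r : R => Complex r 0) (a i)) z) != 0).


Definition posdef (R : realType) (m : nat) (M : 'M[R]_m) : Prop :=
  (M \is symmetricmx) /\ forall v : 'cV[R]_m, v != 0 -> 0 < (v^T *m M *m v) ord0 ord0.

Definition Slin (R : realType) (n : nat) (A : 'I_n -> 'M[R]_n) (l : 'cV[R]_n) : Prop :=
  posdef (- \sum_i l i ord0 *: A i).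

Definition Sed (R : realType) (n : nat) (A : 'I_n -> 'M[R]_n) (l : 'cV[R]_n) : Prop :=
  posdef (1%:M - \sum_i l i ord0 *: A i).

Definition Llin (R : realType) (n : nat) (A : 'I_n -> 'M[R]_n) (a : 'I_n -> 'cV[R]_n)
  (x l : 'cV[R]_n) : 'cV[R]_n :=
  \sum_i l i ord0 *: (a i + A i *m x).

Definition Led (R : realType) (n : nat) (A : 'I_n -> 'M[R]_n) (a : 'I_n -> 'cV[R]_n)
  (x l : 'cV[R]_n) : 'cV[R]_n :=
  x - \sum_i l i ord0 *: (a i + A i *m x).

Definition Rlin (R : realType) (n : nat) (A : 'I_n -> 'M[R]_n) (a : 'I_n -> 'cV[R]_n)
  (alpha : 'I_n -> R) (u : 'cV[R]_n) : Prop :=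
  exists x l, Vf A a alpha x /\ Slin A l /\ u = Llin A a x l.

Definition Red (R : realType) (n : nat) (A : 'I_n -> 'M[R]_n) (a : 'I_n -> 'cV[R]_n)
  (alpha : 'I_n -> R) (u : 'cV[R]_n) : Prop :=
  exists x l, Vf A a alpha x /\ Sed A l /\ u = Led A a x l.

Definition image_of (R : realType) (n : nat) (S : 'cV[R]_n -> Prop)
  (L : 'cV[R]_n -> 'cV[R]_n) (u : 'cV[R]_n) : Prop :=
  exists l, S l /\ u = L l.

Definition linear_map (R : realType) (n : nat) (L : 'cV[R]_n -> 'cV[R]_n) : Prop :=
  forall (c : R) (v w : 'cV[R]_n), L (c *: v + w) = c *: L v + L w.

Definition affine_map (R : realType) (n : nat) (L : 'cV[R]_n -> 'cV[R]_n) : Prop :=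
  linear_map (fun v => L v - L 0).

Definition spectrahedral_cone (R : realType) (n : nat) (P : 'cV[R]_n -> Prop) : Prop :=
  exists (m : nat) (B : 'I_n -> 'M[R]_m),
    (forall j, (B j \is symmetricmx)) /\
    forall u, P u <-> posdef (\sum_j u j ord0 *: B j).

Definition spectrahedron (R : realType) (n : nat) (P : 'cV[R]_n -> Prop) : Prop :=
  exists (m : nat) (B0 : 'M[R]_m) (B : 'I_n -> 'M[R]_m),
    (B0 \is symmetricmx) /\ (forall j, (B j \is symmetricmx)) /\
    forall u, P u <-> posdef (B0 + \sum_j u j ord0 *: B j).

Definition full_dimensional (R : realType) (n : nat) (P : 'cV[R]_n -> Prop) : Prop :=
  exists (c : 'cV[R]_n) (e : R), 0 < e /\
    forall u : 'cV[R]_n, (forall j, `|u j ord0 - c j ord0| < e) -> P u.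

(* Main.v *)
Require Import Defs.
From HB Require Import structures.
From mathcomp Require Import all_boot all_order all_algebra.
From mathcomp Require Import reals.
From mathcomp Require Import complex.
From mathcomp Require Import ring lra.
Import Order.TTheory GRing.Theory Num.Theory.
Local Open Scope ring_scope.

Section S.
Variable R : realType.
Variable n : nat.

Lemma symP (M : 'M[R]_n) : M \is symmetricmx <-> M^T = M.
Proof.
split.
  move/is_hermitianmxP => h; rewrite {2}h expr0 scale1r; apply/matrixP=> i j; rewrite !mxE; reflexivity.
move=> h; apply/is_hermitianmxP; rewrite expr0 scale1r; apply/matrixP=> i j; rewrite !mxE. rewrite -{1}h mxE; reflexivity.
Qed.

Lemma sym_sum (l : 'cV[R]_n) (A : 'I_n -> 'M[R]_n) :
  (forall i, A i \is symmetricmx) -> (\sum_i l i ord0 *: A i)^T = \sum_i l i ord0 *: A i.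
Proof.
move=> hA; rewrite linear_sum; apply: eq_bigr => i _.
by rewrite linearZ /=; move/symP: (hA i) => ->.
Qed.

Lemma eD m k (M N : 'M[R]_(m,k)) i j : (M + N) i j = M i j + N i j.
Proof. by rewrite !mxE. Qed.
Lemma eN m k (M : 'M[R]_(m,k)) i j : (- M) i j = - M i j.
Proof. by rewrite !mxE. Qed.
Lemma eB m k (M N : 'M[R]_(m,k)) i j : (M - N) i j = M i j - N i j.
Proof. by rewrite !mxE. Qed.
Lemma eZ m k c (M : 'M[R]_(m,k)) i j : (c *: M) i j = c * M i j.
Proof. by rewrite !mxE. Qed.
Definition eE := (eB, eD, eN, eZ).

Lemma e11 (M : 'M[R]_1) : M^T ord0 ord0 = M ord0 ord0.
Proof. by rewrite !mxE. Qed.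

Lemma form_sym (S : 'M[R]_n) (p q : 'cV[R]_n) : S^T = S ->
  (p^T *m S *m q) ord0 ord0 = (q^T *m S *m p) ord0 ord0.
Proof.
move=> hS; rewrite -e11 !trmx_mul trmxK hS mulmxA //.
Qed.

Lemma form_sub (S : 'M[R]_n) (p q : 'cV[R]_n) :
  ((p - q)^T *m S *m (p - q)) ord0 ord0 = (p^T *m S *m p) ord0 ord0 - (p^T *m S *m q) ord0 ord0
   - (q^T *m S *m p) ord0 ord0 + (q^T *m S *m q) ord0 ord0.
Proof.
rewrite !raddfB /= !mulmxBl !eE; ring.
Qed.
Lemma dot_sym (p q : 'cV[R]_n) : (p^T *m q) ord0 ord0 = (q^T *m p) ord0 ord0.
Proof. by rewrite -e11 trmx_mul trmxK. Qed.

Lemma dot_sub (p q : 'cV[R]_n) :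
  ((p - q)^T *m (p - q)) ord0 ord0 = (p^T *m p) ord0 ord0 - 2 * (p^T *m q) ord0 ord0
    + (q^T *m q) ord0 ord0.
Proof. rewrite !raddfB /= !mulmxBl !eE (dot_sym q p); ring. Qed.

Variables (A : 'I_n -> 'M[R]_n) (a : 'I_n -> 'cV[R]_n) (alpha : 'I_n -> R).
Hypothesis hA : forall i, A i \is symmetricmx.

Definition Sm (l : 'cV[R]_n) := \sum_i l i ord0 *: A i.
Definition vv (l : 'cV[R]_n) := \sum_i l i ord0 *: a i.
Definition cc (l : 'cV[R]_n) := \sum_i l i ord0 * alpha i.

Lemma Llin_dec x l : Llin A a x l = vv l + Sm l *m x.
Proof.
rewrite /Llin; under eq_bigr do rewrite scalerDr.
rewrite big_split /= /Sm mulmx_suml; congr (_ + _); apply: eq_bigr => i _.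
by rewrite scalemxAl.
Qed.

Lemma V_comb z l : Vf A a alpha z ->
  (z^T *m Sm l *m z) ord0 ord0 + 2 * ((vv l)^T *m z) ord0 ord0 + cc l = 0.
Proof.
move=> hz.
have h0 : \sum_i l i ord0 * quad_eval (A i) (a i) (alpha i) z = 0.
  by rewrite big1 // => i _; rewrite hz mulr0.
have e1 : (z^T *m Sm l *m z) ord0 ord0 = \sum_i l i ord0 * (z^T *m A i *m z) ord0 ord0.
  rewrite /Sm mulmx_sumr mulmx_suml summxE; apply: eq_bigr => i _.
  rewrite -scalemxAr -scalemxAl eZ. done.
have e2 : ((vv l)^T *m z) ord0 ord0 = \sum_i l i ord0 * ((a i)^T *m z) ord0 ord0.
  rewrite /vv linear_sum mulmx_suml summxE; apply: eq_bigr => i _.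
  by rewrite linearZ /= -scalemxAl eZ.
rewrite e1 e2 /cc mulr_sumr -!big_split /= -[RHS]h0; apply: eq_bigr => i _.
rewrite /quad_eval; ring.
Qed.

Lemma Sm_sym l : (Sm l)^T = Sm l.
Proof. exact: sym_sum. Qed.

Lemma Llin_dot x l (w : 'cV[R]_n) : ((Llin A a x l)^T *m w) ord0 ord0 =
  ((vv l)^T *m w) ord0 ord0 + (x^T *m Sm l *m w) ord0 ord0.
Proof. by rewrite Llin_dec raddfD /= mulmxDl trmx_mul Sm_sym eD. Qed.

Lemma key_lin x z l : Vf A a alpha x -> Vf A a alpha z -> z != x -> Slin A l ->
  ((Llin A a x l)^T *m x) ord0 ord0 < ((Llin A a x l)^T *m z) ord0 ord0.
Proof.
move=> hx hz hzx [_ hpos].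
have := hpos (z - x); rewrite subr_eq0 => /(_ hzx).
rewrite form_sub !mulmxN !mulNmx !eN -/(Sm l) => h.
rewrite !Llin_dot.
have := V_comb x l hx; have := V_comb z l hz.
have := form_sym (Sm l) z x (Sm_sym l).
lra.
Qed.

Lemma Led_dot x l (w : 'cV[R]_n) : ((Led A a x l)^T *m w) ord0 ord0 =
  (x^T *m w) ord0 ord0 - ((vv l)^T *m w) ord0 ord0 - (x^T *m Sm l *m w) ord0 ord0.
Proof.
rewrite /Led -/(Llin A a x l) raddfB /= mulmxBl eB Llin_dot; ring.
Qed.

Lemma key_ed x z l : Vf A a alpha x -> Vf A a alpha z -> z != x -> Sed A l ->
  ((x - Led A a x l)^T *m (x - Led A a x l)) ord0 ord0 <
  ((z - Led A a x l)^T *m (z - Led A a x l)) ord0 ord0.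
Proof.
move=> hx hz hzx [_ hpos].
have := hpos (z - x); rewrite subr_eq0 => /(_ hzx).
rewrite -/(Sm l) => h; rewrite [_ *m (1%:M - _)]mulmxBr mulmxBl mulmx1 eB form_sub dot_sub in h.
rewrite !dot_sub (dot_sym z (Led _ _ _ _)) (dot_sym x (Led _ _ _ _)) !Led_dot.
have := V_comb x l hx; have := V_comb z l hz.
have := form_sym (Sm l) z x (Sm_sym l); have := dot_sym z x.
lra.
Qed.

Local Notation rc := (real_complex R).

Lemma mE m k (N : 'M[R]_(m,k)) i j : (map_mx rc N) i j = rc (N i j).
Proof. by rewrite mxE. Qed.

Lemma quad_map (M : 'M[R]_n) b c (x : 'cV[R]_n) :
  quad_eval (map_mx rc M) (map_mx rc b) (rc c) (map_mx rc x) = rc (quad_eval M b c x).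
Proof.
rewrite /quad_eval !map_trmx -!map_mxM !mE.
by rewrite !rmorphD rmorphM rmorph_nat.
Qed.

Lemma jac_map (x : 'cV[R]_n) :
  jacobian (fun i => map_mx rc (A i)) (fun i => map_mx rc (a i)) (map_mx rc x) =
  map_mx rc (jacobian A a x).
Proof.
apply/matrixP => i j; rewrite mxE [in RHS]mE mxE -map_mxM !mE /jacobian -rmorphD; f_equal; rewrite !mxE //.
Qed.

Lemma det_nz x : complete_intersection A a alpha -> Vf A a alpha x ->
  \det (jacobian A a x) != 0.
Proof.
move=> [_ hdet] hx.
have hC : VfC A a alpha (map_mx rc x).
  move=> i; change (quad_eval (map_mx rc (A i)) (map_mx rc (a i)) (rc (alpha i)) (map_mx rc x) = 0).
  by rewrite quad_map hx rmorph0.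
have := hdet _ hC.
change (\det (jacobian (fun i => map_mx rc (A i)) (fun i => map_mx rc (a i)) (map_mx rc x)) != 0 -> \det (jacobian A a x) != 0).
rewrite jac_map det_map_mx; apply: contra => /eqP ->; by rewrite rmorph0.
Qed.

Lemma Llin_mx x l : Llin A a x l = (jacobian A a x)^T *m l.
Proof.
apply/matrixP => j k; rewrite (ord1 k) /Llin summxE !mxE; apply: eq_bigr => i _.
by rewrite !mxE addrC mulrC.
Qed.

Lemma image_bij (S : 'cV[R]_n -> Prop) (L Li : 'cV[R]_n -> 'cV[R]_n) :
  cancel L Li -> cancel Li L -> forall u, image_of S L u <-> S (Li u).
Proof.
move=> K1 K2 u; split; first by move=> [l [hS ->]]; rewrite K1.
by move=> h; exists (Li u); split; last rewrite K2.
Qed.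

Lemma Sm_mul (C : 'M[R]_n) (u : 'cV[R]_n) :
  Sm (C *m u) = \sum_j u j ord0 *: (\sum_i C i j *: A i).
Proof.
rewrite /Sm; under eq_bigr do rewrite mxE scaler_suml.
rewrite exchange_big /=; apply: eq_bigr => j _.
rewrite scaler_sumr; apply: eq_bigr => i _.
by rewrite scalerA mulrC.
Qed.

Lemma Sm_B (p q : 'cV[R]_n) : Sm (p - q) = Sm p - Sm q.
Proof.
by rewrite /Sm -sumrB; apply: eq_bigr => i _; rewrite eB scalerBl.
Qed.

Lemma Bm_sym (C : 'M[R]_n) j : (\sum_i C i j *: A i) \is symmetricmx.
Proof.
apply/symP; rewrite linear_sum; apply: eq_bigr => i _.
by rewrite linearZ /=; move/symP: (hA i) => ->.
Qed.

Lemma form_Sm l (v : 'cV[R]_n) :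
  (v^T *m Sm l *m v) ord0 ord0 = \sum_i l i ord0 * (v^T *m A i *m v) ord0 ord0.
Proof.
rewrite /Sm mulmx_sumr mulmx_suml summxE; apply: eq_bigr => i _.
by rewrite -scalemxAr -scalemxAl eZ.
Qed.

Lemma dot_ge (v : 'cV[R]_n) j : v j ord0 * v j ord0 <= (v^T *m v) ord0 ord0.
Proof.
rewrite mxE (bigD1 j) //= mxE lerDl sumr_ge0 // => i _.
by rewrite mxE -expr2 sqr_ge0.
Qed.

Lemma dot_gt (v : 'cV[R]_n) : v != 0 -> 0 < (v^T *m v) ord0 ord0.
Proof.
move=> hv.
case: (pickP (fun j => v j ord0 != 0)) => [j hj | h0]; last first.
  case/eqP: hv; apply/matrixP => j k; rewrite (ord1 k) mxE.
  by have := h0 j => /= /negbFE /eqP.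
apply: lt_le_trans (dot_ge v j).
have -> : v j ord0 * v j ord0 = `|v j ord0| * `|v j ord0|.
  by rewrite -normrM ger0_norm // -expr2 sqr_ge0.
by apply: mulr_gt0; rewrite normr_gt0.
Qed.

Lemma quad_bound (M : 'M[R]_n) (v : 'cV[R]_n) :
  `|(v^T *m M *m v) ord0 ord0| <= (\sum_k \sum_j `|M j k|) * (v^T *m v) ord0 ord0.
Proof.
set s := (v^T *m v) ord0 ord0.
have hjk : forall j k, `|v j ord0| * `|v k ord0| <= s.
  move=> j k; have := dot_ge v j; have := dot_ge v k.
  have e : forall x : R, x * x = `|x| * `|x| by move=> x; rewrite -normrM ger0_norm // -expr2 sqr_ge0.
  rewrite (e (v j ord0)) (e (v k ord0)); set p := `|v j ord0|; set q := `|v k ord0| => hq hp.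
  have h2 : 2 * (p * q) <= p * p + q * q.
    rewrite -subr_ge0; have -> : p * p + q * q - 2 * (p * q) = (p - q) ^+ 2 by ring.
    exact: sqr_ge0.
  have h3 : 2 * (p * q) <= 2 * s.
    apply: (le_trans h2); have -> : 2 * s = s + s by ring.
    exact: lerD.
  by rewrite ler_pM2l in h3.
rewrite mxE mulr_suml; apply: le_trans (ler_norm_sum _ _ _) _.
apply: ler_sum => k _; rewrite normrM mxE mulr_suml.
apply: le_trans (ler_wpM2r (normr_ge0 _) (ler_norm_sum _ _ _)) _.
rewrite mulr_suml; apply: ler_sum => j _; rewrite normrM mxE.
have -> : `|v j ord0| * `|M j k| * `|v k ord0| = `|M j k| * (`|v j ord0| * `|v k ord0|) by ring.
by apply: ler_wpM2l => //; apply: hjk.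
Qed.

Hypothesis hCI : complete_intersection A a alpha.

Lemma Led_mx x l : Led A a x l = x - (jacobian A a x)^T *m l.
Proof. by rewrite /Led -/(Llin A a x l) Llin_mx. Qed.

Lemma part_lin x : Vf A a alpha x ->
  linear_map (Llin A a x) /\ bijective (Llin A a x) /\
  spectrahedral_cone (image_of (Slin A) (Llin A a x)).
Proof.
move=> hx.
set Jt := (jacobian A a x)^T.
have hU : Jt \in unitmx by rewrite unitmxE det_tr unitfE det_nz.
have K1 : cancel (Llin A a x) (mulmx (invmx Jt)).
  by move=> l; rewrite Llin_mx mulKmx.
have K2 : cancel (mulmx (invmx Jt)) (Llin A a x).
  by move=> u; rewrite Llin_mx mulKVmx.
split; first by move=> c v w; rewrite !Llin_mx mulmxDr scalemxAr.
split; first by exists (mulmx (invmx Jt)).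
exists n, (fun j => - \sum_i (invmx Jt) i j *: A i); split.
  move=> j; apply/symP; rewrite linearN /=.
  by move/symP: (Bm_sym (invmx Jt) j) => ->.
move=> u; rewrite (image_bij _ _ _ K1 K2) /Slin -/(Sm (invmx Jt *m u)) Sm_mul.
have -> : - (\sum_j u j ord0 *: (\sum_i invmx Jt i j *: A i)) =
   \sum_j u j ord0 *: - (\sum_i invmx Jt i j *: A i).
  by rewrite -sumrN; apply: eq_bigr => j _; rewrite scalerN.
by [].
Qed.

Lemma part_ed x : Vf A a alpha x ->
  affine_map (Led A a x) /\ bijective (Led A a x) /\
  spectrahedron (image_of (Sed A) (Led A a x)) /\
  full_dimensional (image_of (Sed A) (Led A a x)).
Proof.
move=> hx.
set Jt := (jacobian A a x)^T.
have hU : Jt \in unitmx by rewrite unitmxE det_tr unitfE det_nz.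
set C := invmx Jt.
have K1 : cancel (Led A a x) (fun u => C *m (x - u)).
  by move=> l; rewrite Led_mx subKr mulKmx.
have K2 : cancel (fun u => C *m (x - u)) (Led A a x).
  by move=> u; rewrite Led_mx mulKVmx // subKr.
have hB0 : (1%:M - Sm (C *m x)) \is symmetricmx.
  by apply/symP; rewrite linearB /= trmx1 Sm_sym.
split.
  move=> c v w; rewrite !Led_mx !mulmx0 !subr0 mulmxDr -scalemxAr.
  by apply/matrixP => i j; rewrite !eE; ring.
split; first by exists (fun u => C *m (x - u)).
split.
  exists n, (1%:M - Sm (C *m x)), (fun j => \sum_i C i j *: A i).
  split => //; split; first by move=> j; apply: Bm_sym.
  move=> u; rewrite (image_bij _ _ _ K1 K2) /Sed -/(Sm (C *m (x - u))).
  rewrite mulmxBr Sm_B (Sm_mul C u).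
  have -> : 1%:M - (Sm (C *m x) - \sum_j u j ord0 *: (\sum_i C i j *: A i)) =
     1%:M - Sm (C *m x) + \sum_j u j ord0 *: (\sum_i C i j *: A i).
    by apply/matrixP => i j; rewrite !eE; ring.
  by [].
pose N i := \sum_k \sum_j `|A i j k|.
pose K := \sum_i (\sum_m `|C i m|) * N i.
have K0 : 0 <= K.
  apply: sumr_ge0 => i _; apply: mulr_ge0; apply: sumr_ge0 => m _ //.
  by apply: sumr_ge0 => j _.
have K1' : 0 < K + 1 by apply: ltr_wpDl K0 ltr01.
exists x, (K + 1)^-1; split; first by rewrite invr_gt0.
set e := (K + 1)^-1.
have eK : e * K < 1.
  by rewrite mulrC ltr_pdivrMr // mul1r ltrDl ltr01.
move=> u hu; rewrite (image_bij _ _ _ K1 K2) /Sed -/(Sm (C *m (x - u))).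
set l := C *m (x - u).
split; first by apply/symP; rewrite linearB /= trmx1 Sm_sym.
move=> v hv.
rewrite [_ *m (1%:M - _)]mulmxBr mulmxBl mulmx1 eB form_Sm.
set s := (v^T *m v) ord0 ord0.
have s0 : 0 < s by apply: dot_gt.
have hl : forall i, `|l i ord0| <= (\sum_m `|C i m|) * e.
  move=> i; rewrite /l mxE mulr_suml; apply: le_trans (ler_norm_sum _ _ _) _.
  apply: ler_sum => m _; rewrite normrM eB distrC; apply: ler_wpM2l => //.
  exact: ltW.
have hsum : \sum_i l i ord0 * (v^T *m A i *m v) ord0 ord0 <= e * s * K.
  apply: le_trans (ler_norm _) _; apply: le_trans (ler_norm_sum _ _ _) _.
  rewrite /K mulr_sumr; apply: ler_sum => i _; rewrite normrM.
  apply: le_trans (ler_pM (normr_ge0 _) (normr_ge0 _) (hl i) (quad_bound (A i) v)) _.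
  rewrite le_eqVlt; apply/orP; left; apply/eqP; rewrite -/s /N; ring.
have h2 : e * s * K < s.
  rewrite (_ : e * s * K = s * (e * K)); last by ring.
  by rewrite -{2}(mulr1 s) ltr_pM2l.
by rewrite subr_gt0; exact: le_lt_trans hsum h2.
Qed.
End S.

Theorem corollary4p3 (R : realType) (n : nat) (A : 'I_n -> 'M[R]_n)
  (a : 'I_n -> 'cV[R]_n) (alpha : 'I_n -> R) (k : nat) (pts : seq 'cV[R]_n) :
  (forall i, (A i \is symmetricmx)) ->
  complete_intersection A a alpha ->
  uniq pts -> size pts = k -> (forall x, Vf A a alpha x <-> x \in pts) ->
  (k <= 2 ^ n)%N ->
  (* (a) *)
  ((forall u, Rlin A a alpha u <-> exists2 x, x \in pts & image_of (Slin A) (Llin A a x) u) /\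
   (forall x y u, x \in pts -> y \in pts -> x != y ->
       image_of (Slin A) (Llin A a x) u -> ~ image_of (Slin A) (Llin A a y) u) /\
   (forall x, x \in pts ->
       linear_map (Llin A a x) /\ bijective (Llin A a x) /\
       spectrahedral_cone (image_of (Slin A) (Llin A a x)))) /\
  (* (b) *)
  ((forall u, Red A a alpha u <-> exists2 x, x \in pts & image_of (Sed A) (Led A a x) u) /\
   (forall x y u, x \in pts -> y \in pts -> x != y ->
       image_of (Sed A) (Led A a x) u -> ~ image_of (Sed A) (Led A a y) u) /\
   (forall x, x \in pts ->
       affine_map (Led A a x) /\ bijective (Led A a x) /\
       spectrahedron (image_of (Sed A) (Led A a x)) /\
       full_dimensional (image_of (Sed A) (Led A a x)))).
Proof.
move=> hA hCI _ _ hV _.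
split; split; [| split | | split].
- move=> u; split.
    move=> [x [l [hx [hS ->]]]]; exists x; first by apply/hV.
    by exists l.
  by move=> [x /hV hx [l [hS ->]]]; exists x, l.
- move=> x y u /hV hx /hV hy hxy [l [hl ->]] [l' [hl' e]].
  have hyx : y != x by rewrite eq_sym.
  have h1 := @key_lin _ _ _ _ _ hA x y l hx hy hyx hl.
  have h2 := @key_lin _ _ _ _ _ hA y x l' hy hx hxy hl'.
  by rewrite e in h1; have := lt_trans h1 h2; rewrite ltxx.
- by move=> x /hV hx; exact: (@part_lin _ _ _ _ _ hA hCI x hx).
- move=> u; split.
    move=> [x [l [hx [hS ->]]]]; exists x; first by apply/hV.
    by exists l.
  by move=> [x /hV hx [l [hS ->]]]; exists x, l.
- move=> x y u /hV hx /hV hy hxy [l [hl ->]] [l' [hl' e]].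
  have hyx : y != x by rewrite eq_sym.
  have h1 := @key_ed _ _ _ _ _ hA x y l hx hy hyx hl.
  have h2 := @key_ed _ _ _ _ _ hA y x l' hy hx hxy hl'.
  by rewrite e in h1; have := lt_trans h1 h2; rewrite ltxx.
- by move=> x /hV hx; exact: (@part_ed _ _ _ _ _ hA hCI x hx).
Qed.
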